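(* Let $\mathbb X,\mathbb Y$ be Euclidean spaces, $\Phi\colon\mathbb X\rightrightarrows\mathbb Y$ with closed graph, $(\bar x,\bar y)\in\operatorname{gph}\Phi$, $u\in\mathbb S_{\mathbb X}$. If $\Phi$ is quasi-normal in direction $u$ at $(\bar x,\bar y)$ with respect to some orthonormal basis $\mathcal E=\{e_1,\dots,e_m\}$ of $\mathbb Y$, then $\Phi$ is strongly asymptotically regular at $(\bar x,\bar y)$ in direction $u$ and metrically subregular at $(\bar x,\bar y)$ in direction $u$.
   Context: $\widehat D^*\Phi(x,y)(y^* )=\{x^*\mid(x^*,-y^* )\in\widehat{\mathcal N}_{\operatorname{gph}\Phi}(x,y)\}$ (regular coderivative); $D^*\Phi((\bar x,\bar y);(u,v))(y^* )=\{x^*\mid(x^*,-y^* )\in\mathcal N_{\operatorname{gph}\Phi}((\bar x,\bar y);(u,v))\}$ with the directional limiting normal cone ($\eta\in\mathcal N_Q(z;w)$ iff there are $w_k\to w$, $t_k\downarrow0$, $\eta_k\to\eta$, $\eta_k\in\widehat{\mathcal N}_Q(z+t_kw_k)$); $\ker\Psi=\{y^*\mid0\in\Psi(y^* )\}$, $\operatorname{Im}\Psi=\bigcup\Psi(y^* )$. Quasi-normality in direction $u$ w.r.t. $\mathcal E$: there is no nonzero $\lambda\in\ker D^*\Phi((\bar x,\bar y);(u,0))$ for which there exist $(x_k,y_k)\in\operatorname{gph}\Phi$ with $x_k\ne\bar x$, $\lambda_k\in\mathbb Y$, $\eta_k\in\mathbb X$ such that $x_k\to\bar x$, $y_k\to\bar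 y$, $\lambda_k\to\lambda$, $\eta_k\to0$, $\frac{x_k-\bar x}{\|x_k-\bar x\|}\to u$, $\frac{y_k-\bar y}{\|x_k-\bar x\|}\to0$, and for all $k$ and $i$: $\eta_k\in\widehat D^*\Phi(x_k,y_k)(\lambda_k)$ and $\langle\lambda,e_i\rangle\langle y_k-\bar y,e_i\rangle>0$ whenever $\langle\lambda,e_i\rangle\ne0$. Strong asymptotic regularity in direction $u$: for all $(x_k,y_k)\in\operatorname{gph}\Phi$, $x_k^*$, $\lambda_k$, $x^*$, $y^*$ with $x_k\notin\Phi^{-1}(\bar y)$, $y_k\neq\bar y$, $x_k^*\in\widehat D^*\Phi(x_k,y_k)(\lambda_k)$ and $x_k\to\bar x$, $y_k\to\bar y$, $x_k^*\to x^*$, $\frac{x_k-\bar x}{\|x_k-\bar x\|}\to u$, $\frac{y_k-\bar y}{\|x_k-\bar x\|}\to0$, $\frac{\|y_k-\bar y\|}{\|x_k-\bar x\|}\lambda_k\to y^*$, $\|\lambda_k\|\to\infty$, $\frac{y_k-\bar y}{\|y_k-\bar y\|}-\frac{\lambda_k}{\|\lambda_k\|}\to0$, one has $x^*\in\operatorname{Im}D^*\Phi((\bar x,\bar y);(u,0))$. Metric subregularity in direction $u$: there are $\varepsilon,\delta,\kappa>0$ with $\operatorname{dist}(x,\Phi^{-1}(\bar y))\le\kappa\operatorname{dist}(\bar y,\Phi(x))$ for all $x\in\bar x+\mathbb B_{\varepsilon,\delta}(u)$, $\mathbb B_{\varepsilon,\delta}(u)=\{w\mid\|\|w\|u-\|u\|w\|\le\delta\|u\|\|w\|,\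 \|w\|\le\varepsilon\}$. *)

(* Defs.v *)
From HB Require Import structures.
From mathcomp Require Import all_boot all_order all_algebra.
From mathcomp Require Import all_classical all_reals all_analysis.
Set Implicit Arguments. Unset Strict Implicit. Unset Printing Implicit Defensive.
Import Order.TTheory GRing.Theory Num.Theory.
Import numFieldNormedType.Exports.
Local Open Scope classical_set_scope.
Local Open Scope ring_scope.

Section Defs.
Variable R : realType.

Definition dot {k : nat} (u v : 'rV[R]_k) : R := \sum_(i < k) u 0 i * v 0 i.
Definition enorm {k : nat} (u : 'rV[R]_k) : R := Num.sqrt (dot u u).

(* orthonormal family of k vectors in R^k (hence an orthonormal basis) *)
Definition orthonormal_basis {k : nat} (e : 'I_k -> 'rV[R]_k) : Prop :=
  forall i j, dot (e i) (e j) = (if i == j then 1 else 0).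

Context {n m : nat}.
Implicit Types (Phi : 'rV[R]_n -> set 'rV[R]_m).

Definition gph Phi : set ('rV[R]_n * 'rV[R]_m) := [set p | Phi p.1 p.2].

Definition reg_normal Phi (x : 'rV[R]_n) (y : 'rV[R]_m)
    (xs : 'rV[R]_n) (ys : 'rV[R]_m) : Prop :=
  Phi x y /\
  forall eps : R, 0 < eps -> exists delta : R, 0 < delta /\
    forall x' y', Phi x' y' ->
      Num.sqrt (dot (x' - x) (x' - x) + dot (y' - y) (y' - y)) < delta ->
      dot xs (x' - x) + dot ys (y' - y) <=
        eps * Num.sqrt (dot (x' - x) (x' - x) + dot (y' - y) (y' - y)).

Definition reg_coderiv Phi x y (ys : 'rV[R]_m) (xs : 'rV[R]_n) : Prop :=
  reg_normal Phi x y xs (- ys).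

Definition dir_normal Phi (xb : 'rV[R]_n) (yb : 'rV[R]_m) (u : 'rV[R]_n) (v : 'rV[R]_m)
    (xs : 'rV[R]_n) (ys : 'rV[R]_m) : Prop :=
  exists (wx : nat -> 'rV[R]_n) (wy : nat -> 'rV[R]_m) (t : nat -> R)
         (xsk : nat -> 'rV[R]_n) (ysk : nat -> 'rV[R]_m),
    wx @ \oo --> u /\ wy @ \oo --> v /\
    (forall k, 0 < t k) /\ t @ \oo --> (0 : R) /\
    xsk @ \oo --> xs /\ ysk @ \oo --> ys /\
    forall k, reg_normal Phi (xb + t k *: wx k) (yb + t k *: wy k) (xsk k) (ysk k).

Definition dir_coderiv Phi xb yb u v (ys : 'rV[R]_m) (xs : 'rV[R]_n) : Prop :=
  dir_normal Phi xb yb u v xs (- ys).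

Definition quasi_normal_dir Phi (xb : 'rV[R]_n) (yb : 'rV[R]_m) (u : 'rV[R]_n)
    (e : 'I_m -> 'rV[R]_m) : Prop :=
  ~ exists lam : 'rV[R]_m,
      lam != 0 /\ dir_coderiv Phi xb yb u 0 lam 0 /\
      exists (xk : nat -> 'rV[R]_n) (yk : nat -> 'rV[R]_m)
             (lamk : nat -> 'rV[R]_m) (etak : nat -> 'rV[R]_n),
        (forall k, Phi (xk k) (yk k)) /\ (forall k, xk k != xb) /\
        xk @ \oo --> xb /\ yk @ \oo --> yb /\
        lamk @ \oo --> lam /\ etak @ \oo --> (0 : 'rV[R]_n) /\
        (fun k => (enorm (xk k - xb))^-1 *: (xk k - xb)) @ \oo --> u /\
        (fun k => (enorm (xk k - xb))^-1 *: (yk k - yb)) @ \oo --> (0 : 'rV[R]_m) /\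
        forall k, reg_coderiv Phi (xk k) (yk k) (lamk k) (etak k) /\
          forall i, dot lam (e i) != 0 -> 0 < dot lam (e i) * dot (yk k - yb) (e i).

Definition strongly_asymp_regular_dir Phi (xb : 'rV[R]_n) (yb : 'rV[R]_m)
    (u : 'rV[R]_n) : Prop :=
  forall (xk : nat -> 'rV[R]_n) (yk : nat -> 'rV[R]_m) (xsk : nat -> 'rV[R]_n)
         (lamk : nat -> 'rV[R]_m) (xs : 'rV[R]_n) (ys : 'rV[R]_m),
    (forall k, Phi (xk k) (yk k)) ->
    (forall k, ~ Phi (xk k) yb) ->
    (forall k, yk k != yb) ->
    (forall k, reg_coderiv Phi (xk k) (yk k) (lamk k) (xsk k)) ->
    xk @ \oo --> xb -> yk @ \oo --> yb -> xsk @ \oo --> xs ->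
    (fun k => (enorm (xk k - xb))^-1 *: (xk k - xb)) @ \oo --> u ->
    (fun k => (enorm (xk k - xb))^-1 *: (yk k - yb)) @ \oo --> (0 : 'rV[R]_m) ->
    (fun k => (enorm (yk k - yb) / enorm (xk k - xb)) *: lamk k) @ \oo --> ys ->
    (forall M : R, exists N : nat, forall k, (N <= k)%N -> M < enorm (lamk k)) ->
    (fun k => (enorm (yk k - yb))^-1 *: (yk k - yb) - (enorm (lamk k))^-1 *: lamk k)
      @ \oo --> (0 : 'rV[R]_m) ->
    exists ys' : 'rV[R]_m, dir_coderiv Phi xb yb u 0 ys' xs.

End Defs.

(* distance from a point to a set, in the extended reals (+oo for the empty set) *)
Definition edist {R : realType} {k : nat} (x : 'rV[R]_k) (A : set 'rV[R]_k) : \bar R :=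
  ereal_inf [set (enorm (x - a))%:E | a in A].

Definition dir_ball {R : realType} {n : nat} (eps delta : R) (u w : 'rV[R]_n) : Prop :=
  enorm (enorm w *: u - enorm u *: w) <= delta * enorm u * enorm w /\ enorm w <= eps.

Definition metric_subregular_dir {R : realType} {n m : nat}
    (Phi : 'rV[R]_n -> set 'rV[R]_m) (xb : 'rV[R]_n) (yb : 'rV[R]_m) (u : 'rV[R]_n) : Prop :=
  exists eps delta kappa : R, 0 < eps /\ 0 < delta /\ 0 < kappa /\
    forall x, dir_ball eps delta u (x - xb) ->
      (edist x [set x' | Phi x' yb] <= kappa%:E * edist yb (Phi x))%E.

(* Main.v *)
Require Import Defs.
From HB Require Import structures.
From mathcomp Require Import all_boot all_order all_algebra.
From mathcomp Require Import all_classical all_reals all_analysis.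
From mathcomp Require Import ring lra.
From Stdlib Require Classical_Prop.
Import Order.TTheory GRing.Theory Num.Theory.
Import numFieldNormedType.Exports.
Local Open Scope classical_set_scope.
Local Open Scope ring_scope.
Set Implicit Arguments. Unset Strict Implicit. Unset Printing Implicit Defensive.

Section Eucl.
Variable R : realType.
Variable k : nat.
Implicit Types u v w : 'rV[R]_k.

Lemma dotC u v : dot u v = dot v u.
Proof. by rewrite /dot; apply: eq_bigr => i _; rewrite mulrC. Qed.
Lemma dotDl u v w : dot (u + v) w = dot u w + dot v w.
Proof. by rewrite /dot -big_split; apply: eq_bigr => i _; rewrite !mxE mulrDl. Qed.
Lemma dotZl c u v : dot (c *: u) v = c * dot u v.
Proof. by rewrite /dot mulr_sumr; apply: eq_bigr => i _; rewrite !mxE mulrA. Qed.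
Lemma dotNl u v : dot (- u) v = - dot u v.
Proof. by rewrite -scaleN1r dotZl mulN1r. Qed.
Lemma dotBl u v w : dot (u - v) w = dot u w - dot v w.
Proof. by rewrite dotDl dotNl. Qed.
Lemma dotDr u v w : dot w (u + v) = dot w u + dot w v.
Proof. by rewrite dotC dotDl !(dotC w). Qed.
Lemma dotZr c u v : dot v (c *: u) = c * dot v u.
Proof. by rewrite dotC dotZl dotC. Qed.
Lemma dotNr u v : dot v (- u) = - dot v u.
Proof. by rewrite dotC dotNl dotC. Qed.
Lemma dotBr u v w : dot w (u - v) = dot w u - dot w v.
Proof. by rewrite dotDr dotNr. Qed.
Lemma dot0l v : dot 0 v = 0.
Proof. by rewrite /dot big1 // => i _; rewrite mxE mul0r. Qed.
Lemma dot0r v : dot v 0 = 0.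
Proof. by rewrite dotC dot0l. Qed.
Lemma dot_ge0 u : 0 <= dot u u.
Proof. by rewrite /dot; apply: sumr_ge0 => i _; rewrite -expr2 sqr_ge0. Qed.
Lemma coord_sq_le u i : u 0 i ^+ 2 <= dot u u.
Proof.
rewrite /dot (bigD1 i) //= expr2 lerDl; apply: sumr_ge0 => j _.
by rewrite -expr2 sqr_ge0.
Qed.
Lemma dot_eq0 u : dot u u = 0 -> u = 0.
Proof.
move=> h; apply/rowP => i; rewrite mxE.
have := coord_sq_le u i; rewrite h => h2.
have : u 0 i ^+ 2 = 0 by apply/eqP; rewrite eq_le h2 sqr_ge0.
by move/eqP; rewrite expf_eq0 /= => /eqP.
Qed.
Lemma CS u v : dot u v ^+ 2 <= dot u u * dot v v.
Proof.
have [v0|vn0] := eqVneq v 0.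
  by rewrite v0 dot0r dot0r expr2 mul0r mulr0.
have a_gt0 : 0 < dot v v.
  rewrite lt_neqAle dot_ge0 andbT eq_sym; apply: contraNneq vn0 => h.
  by apply/eqP; exact: dot_eq0.
have := dot_ge0 (dot v v *: u - dot u v *: v).
rewrite !(dotBl, dotBr, dotZl, dotZr) (dotC v u) => h.
have h2 : 0 <= dot v v * (dot v v * dot u u - dot u v ^+ 2).
  by move: h; rewrite expr2; lra.
rewrite pmulr_rge0 // in h2.
by rewrite mulrC; lra.
Qed.

Lemma le_sqr_nonneg (a b : R) : 0 <= b -> a ^+ 2 <= b ^+ 2 -> a <= b.
Proof. move=> hb h; rewrite !expr2 in h; nra. Qed.

Lemma enorm_ge0 u : 0 <= enorm u.
Proof. exact: sqrtr_ge0. Qed.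
Lemma enorm_sq u : enorm u ^+ 2 = dot u u.
Proof. by rewrite /enorm sqr_sqrtr // dot_ge0. Qed.
Lemma enormZ c u : enorm (c *: u) = `|c| * enorm u.
Proof.
rewrite /enorm dotZl dotZr mulrA -expr2 sqrtrM ?sqr_ge0 //.
by rewrite sqrtr_sqr.
Qed.
Lemma enormN u : enorm (- u) = enorm u.
Proof. by rewrite -scaleN1r enormZ normrN normr1 mul1r. Qed.
Lemma enormB u v : enorm (u - v) = enorm (v - u).
Proof. by rewrite -enormN opprB. Qed.
Lemma enorm0 : enorm (0 : 'rV[R]_k) = 0.
Proof. by rewrite /enorm dot0l sqrtr0. Qed.
Lemma enorm_eq0 u : enorm u = 0 -> u = 0.
Proof.
move=> h; apply: dot_eq0; rewrite -enorm_sq h; by rewrite expr2 mul0r.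
Qed.
Lemma enorm_gt0 u : u != 0 -> 0 < enorm u.
Proof.
move=> un; rewrite lt_neqAle enorm_ge0 andbT eq_sym; apply/eqP => h.
by move/eqP: un; apply; apply: enorm_eq0.
Qed.
Lemma dot_le u v : dot u v <= enorm u * enorm v.
Proof.
have h := CS u v; rewrite -!enorm_sq in h.
have h1 := enorm_ge0 u; have h2 := enorm_ge0 v.
apply: le_sqr_nonneg; first exact: mulr_ge0.
by rewrite exprMn.
Qed.
Lemma dot_abs_le u v : `|dot u v| <= enorm u * enorm v.
Proof.
rewrite ler_norml dot_le andbT.
have := dot_le u (- v); rewrite dotNr enormN; lra.
Qed.
Lemma enorm_triangle u v : enorm (u + v) <= enorm u + enorm v.
Proof.
apply: le_sqr_nonneg; first by rewrite addr_ge0 // enorm_ge0.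
rewrite enorm_sq dotDl !dotDr (dotC v u) -!enorm_sq.
have := dot_le u v; rewrite !expr2; lra.
Qed.
Lemma coord_le u i : `|u 0 i| <= enorm u.
Proof.
apply: le_sqr_nonneg; first exact: enorm_ge0.
by rewrite real_normK ?num_real // enorm_sq coord_sq_le.
Qed.
Lemma enorm_coord_bound u (M : R) : 0 <= M -> (forall i, `|u 0 i| <= M) ->
  enorm u <= k%:R * M.
Proof.
move=> M0 hM; apply: le_sqr_nonneg; first by rewrite mulr_ge0.
rewrite enorm_sq.
have h1 : dot u u <= k%:R * M ^+ 2.
  rewrite /dot -[k in k%:R]card_ord -sum1_card natr_sum mulr_suml.
  apply: ler_sum => i _; rewrite mul1r -expr2 -real_normK ?num_real //.
  by rewrite lerXn2r // ?nnegrE ?normr_ge0 // hM.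
apply: (le_trans h1); rewrite exprMn ler_wpM2r ?sqr_ge0 //.
rewrite -natrX ler_nat; case: (k) => // k'.
by rewrite expnS leq_pmulr.
Qed.
End Eucl.

Definition ev (P : nat -> Prop) := exists N, forall j, (N <= j)%N -> P j.
Lemma ev_near (P : nat -> Prop) : ev P <-> \forall j \near \oo, P j.
Proof.
split.
- by move=> [N hN]; exists N => // j /= hj; apply: hN.
- by move=> [N _ hN]; exists N => j hj; apply: hN.
Qed.
Lemma ev_and (P Q : nat -> Prop) : ev P -> ev Q -> ev (fun j => P j /\ Q j).
Proof.
move=> [N1 h1] [N2 h2]; exists (maxn N1 N2) => j hj; split.
- by apply: h1; apply: leq_trans hj; apply: leq_maxl.
- by apply: h2; apply: leq_trans hj; apply: leq_maxr.
Qed.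
Lemma ev_impl (P Q : nat -> Prop) : (forall j, P j -> Q j) -> ev P -> ev Q.
Proof. by move=> h [N hN]; exists N => j /hN /h. Qed.
Lemma ev_all (I : finType) (P : I -> nat -> Prop) : (forall i, ev (P i)) ->
  ev (fun j => forall i, P i j).
Proof.
move=> h; have [f hf] := choice h.
exists (\max_i f i) => j hj i; apply: (hf i); apply: leq_trans hj.
exact: leq_bigmax.
Qed.

Section T.
Variable R : realType.
Variable k : nat.
Lemma coord_le_mx (v : 'rV[R]_k) i : `|v 0 i| <= `|v|.
Proof.
change (`|v 0 i| <= mx_norm v); rewrite mx_normrE.
by apply/bigmax_geP; right; exists (0, i).
Qed.
Lemma mx_le_enorm (v : 'rV[R]_k) : `|v| <= enorm v.
Proof.
change (mx_norm v <= enorm v); rewrite mx_normrE.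
apply: bigmax_le; first exact: enorm_ge0.
move=> [a b] _ /=; rewrite [a]ord1; exact: coord_le.
Qed.
Lemma cvg_of_enorm (a : nat -> 'rV[R]_k) (l : 'rV[R]_k) :
  (forall eps, 0 < eps -> ev (fun j => enorm (a j - l) < eps)) -> a @ \oo --> l.
Proof.
move=> h; apply/cvgrPdist_lt => eps /h /ev_near; apply: filterS => j hj.
by rewrite -normrN opprB; apply: le_lt_trans (mx_le_enorm _) hj.
Qed.
Lemma enorm_of_cvg (a : nat -> 'rV[R]_k) (l : 'rV[R]_k) : a @ \oo --> l ->
  forall eps, 0 < eps -> ev (fun j => enorm (a j - l) < eps).
Proof.
move/cvgrPdist_lt => h eps eps0.
have e0 : 0 < eps / (k%:R + 1) by rewrite divr_gt0 // ltr_wpDl.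
apply/ev_near; apply: filterS (h _ e0) => j hj.
apply: (le_lt_trans (enorm_coord_bound (M := eps / (k%:R + 1)) _ _)).
- exact: ltW.
- move=> i; apply: ltW; apply: le_lt_trans (coord_le_mx _ i) _.
  by rewrite -normrN opprB.
- rewrite mulrA ltr_pdivrMr ?ltr_wpDl //; nra.
Qed.
End T.
Lemma cvgR_of (R : realType) (t : nat -> R) (c : R) :
  (forall eps, 0 < eps -> ev (fun j => `|t j - c| < eps)) -> t @ \oo --> c.
Proof.
move=> h; apply/cvgrPdist_lt => eps /h /ev_near; apply: filterS => j hj.
by rewrite -normrN opprB.
Qed.
Lemma ofcvgR (R : realType) (t : nat -> R) (c : R) : t @ \oo --> c ->
  (forall eps, 0 < eps -> ev (fun j => `|t j - c| < eps)).
Proof.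
move/cvgrPdist_lt => h eps /h /ev_near [N hN]; exists N => j /hN.
by rewrite -normrN opprB.
Qed.
Lemma ev_inv (R : realType) (c : R) : 0 < c -> ev (fun j => (j.+1%:R)^-1 < c).
Proof.
move=> c0.
have [N hN] : exists N : nat, c^-1 < N%:R.
  exists (Num.truncn (c^-1)).+1; exact: truncnS_gt.
exists N => j hj.
rewrite -(invrK c) ltf_pV2 ?posrE ?invr_gt0 ?ltr0Sn //.
apply: lt_le_trans hN _; rewrite ler_nat; exact: leqW.
Qed.
Lemma cluster_seq (T : topologicalType) (A : set T) (q : nat -> T) :
  compact A -> (forall j, A (q j)) ->
  exists p, A p /\ forall W, nbhs p W -> forall N, exists j, (N <= j)%N /\ W (q j).
Proof.
move=> cA hq.
have [p [Ap cl]] : A `&` cluster (q @ \oo) !=set0.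
  apply: (cA (q @ \oo)).
  by exists 0%N => // j _; apply: hq.
exists p; split => // W hW N.
have F1 : (q @ \oo) (q @` [set j | (N <= j)%N]).
  by exists N => // j /= hj; exists j.
have [z [[j hj <-] Wz]] := cl _ _ F1 hW.
by exists j.
Qed.

Lemma box_compact (R : realType) k (M : R) :
  compact [set v : 'rV[R]_k | forall i, `|v 0 i| <= M].
Proof.
have := @rV_compact R k (fun=> `[(- M), M]%classic) (fun=> @segment_compact R _ _).
congr compact; apply/seteqP; split => v /= h i; have := h i;
  by rewrite /= in_itv /= ler_norml.
Qed.

Lemma nbhs_pair (R : realType) k l (p1 : 'rV[R]_k) (p2 : 'rV[R]_l) (d : R) : 0 < d ->
  nbhs (p1, p2) (ball p1 d `*` ball p2 d).
Proof.
move=> d0; exists (ball p1 d, ball p2 d) => //=; split; exact: nbhsx_ballx.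
Qed.

Lemma exists_min (R : realType) (T : topologicalType) (A : set T) (psi : T -> R) :
  compact A -> A !=set0 -> (forall p, 0 <= psi p) ->
  (forall p, A p -> forall eps, 0 < eps ->
     exists W, nbhs p W /\ forall q, W q -> A q -> psi p <= psi q + eps) ->
  exists p, A p /\ forall q, A q -> psi p <= psi q.
Proof.
move=> cA [a0 Aa0] psi0 lsc.
set E := psi @` A.
have hE : has_inf E.
  split; first by exists (psi a0), a0.
  by exists 0 => _ [q _ <-].
have hq : forall j : nat, exists q, A q /\ psi q < inf E + (j.+1%:R)^-1.
  move=> j; have ej : 0 < (j.+1%:R : R)^-1 by rewrite invr_gt0 ltr0Sn.
  have [_ [q Aq <-] h] := inf_adherent ej hE.
  by exists q.
have [q hq'] := choice hq.
have [p [Ap hp]] := cluster_seq cA (fun j => (hq' j).1).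
exists p; split => // r Ar.
have pv : psi p <= inf E.
  apply/ler_addgt0Pr => eps eps0.
  have e2 : 0 < eps / 2 by rewrite divr_gt0.
  have [W [hW hWp]] := lsc p Ap _ e2.
  have [N hN] := ev_inv e2.
  have [j [hj Wj]] := hp W hW N.
  have := hWp _ Wj (hq' j).1; have := (hq' j).2; have := hN j hj.
  move=> h1 h2 h3; move: (inf E) h2 => iE h2; move: (j.+1%:R^-1) h1 h2 => z h1 h2; lra.
apply: le_trans pv _; apply: ge_inf; first by case: hE.
by exists r.
Qed.

Lemma cvg_inv (R : realType) k (a : nat -> 'rV[R]_k) (l : 'rV[R]_k) :
  (forall j, enorm (a j - l) <= (j.+1%:R)^-1) -> a @ \oo --> l.
Proof.
move=> h; apply: cvg_of_enorm => eps /ev_inv [N hN]; exists N => j /hN.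
by apply: le_lt_trans (h j).
Qed.
Lemma cvgR_inv (R : realType) (a : nat -> R) (l : R) :
  (forall j, `|a j - l| <= (j.+1%:R)^-1) -> a @ \oo --> l.
Proof.
move=> h; apply: cvgR_of => eps /ev_inv [N hN]; exists N => j /hN.
by apply: le_lt_trans (h j).
Qed.
Lemma inv_le1 (R : realType) (j : nat) : 0 < (j.+1%:R : R)^-1 <= 1.
Proof.
rewrite invr_gt0 ltr0Sn /= invr_le1 ?ler1n ?unitfE ?pnatr_eq0 ?ltr0Sn //.
Qed.

Lemma reg_normal_scale (R : realType) n m (Phi : 'rV[R]_n -> set 'rV[R]_m) x y xs ys (c : R) :
  0 < c -> reg_normal Phi x y xs ys -> reg_normal Phi x y (c *: xs) (c *: ys).
Proof.
move=> c0 [hP h]; split => // eps eps0.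
have [d [d0 hd]] := h (eps / c) (divr_gt0 eps0 c0).
exists d; split => // x' y' hx hd'.
rewrite dotZl dotZl -mulrDr.
have := hd _ _ hx hd'.
rewrite -(ler_pM2l c0) => h2; apply: le_trans h2 _.
by rewrite mulrA mulrCA divff ?gt_eqF // mulr1.
Qed.

Section Main.
Variable R : realType.
Variables n m : nat.
Variable Phi : 'rV[R]_n -> set 'rV[R]_m.
Variables (xb : 'rV[R]_n) (yb : 'rV[R]_m) (u : 'rV[R]_n) (e : 'I_m -> 'rV[R]_m).

Definition Bdata (mu : 'rV[R]_m) (eps : R) x y l eta :=
  Phi x y /\ x != xb /\ reg_coderiv Phi x y l eta /\ enorm (x - xb) < eps /\
  enorm (y - yb) <= eps * enorm (x - xb) /\
  enorm ((enorm (x - xb))^-1 *: (x - xb) - u) < eps /\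
  enorm eta < eps /\ enorm (l - mu) < eps /\
  (forall i, dot mu (e i) != 0 -> 0 < dot mu (e i) * dot (y - yb) (e i)).

Lemma notQN mu : mu != 0 ->
  (forall eps, 0 < eps -> exists x y l eta, Bdata mu eps x y l eta) ->
  ~ quasi_normal_dir Phi xb yb u e.
Proof.
move=> mu0 hB; apply; exists mu; split => //.
have hj : forall j : nat, exists d : 'rV[R]_n * 'rV[R]_m * 'rV[R]_m * 'rV[R]_n,
    Bdata mu (j.+1%:R^-1) d.1.1.1 d.1.1.2 d.1.2 d.2.
  move=> j; have [|x [y [l [eta hd]]]] := hB (j.+1%:R^-1).
    by case/andP: (inv_le1 R j).
  by exists (x, y, l, eta).
have [f hf] := choice hj.
set xk := fun j => (f j).1.1.1.
set yk := fun j => (f j).1.1.2.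
set lk := fun j => (f j).1.2.
set etak := fun j => (f j).2.
set t := fun j => enorm (xk j - xb).
have H : forall j, let z := (j.+1%:R^-1 : R) in
  Phi (xk j) (yk j) /\ xk j != xb /\ reg_coderiv Phi (xk j) (yk j) (lk j) (etak j) /\
  t j <= z /\ enorm (yk j - yb) <= z * t j /\
  enorm ((t j)^-1 *: (xk j - xb) - u) <= z /\
  enorm (etak j) <= z /\ enorm (lk j - mu) <= z /\
  (forall i, dot mu (e i) != 0 -> 0 < dot mu (e i) * dot (yk j - yb) (e i)).
  move=> j z; have [h1 [h2 [h3 [h4 [h5 [h6 [h7 [h8 h9]]]]]]]] := hf j.
  split=> //; split=> //; split=> //; split; first exact: ltW.
  split=> //; split; first exact: ltW. split; first exact: ltW.
  split; first exact: ltW. done.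
have tpos : forall j, 0 < t j.
  move=> j; apply: enorm_gt0; rewrite subr_eq0; by case: (H j) => _ [].
have xk_cvg : xk @ \oo --> xb.
  by apply: cvg_inv => j; case: (H j) => _ [_ [_ [h _]]].
have wx_cvg : (fun j => (t j)^-1 *: (xk j - xb)) @ \oo --> u.
  by apply: cvg_inv => j; case: (H j) => _ [_ [_ [_ [_ [h _]]]]].
have wy_cvg : (fun j => (t j)^-1 *: (yk j - yb)) @ \oo --> (0 : 'rV[R]_m).
  apply: cvg_inv => j; rewrite subr0 enormZ ger0_norm ?invr_ge0 ?(ltW (tpos j)) //.
  rewrite mulrC ler_pdivrMr ?tpos //; by case: (H j) => _ [_ [_ [_ [h _]]]].
have yk_cvg : yk @ \oo --> yb.
  apply: cvg_inv => j; case: (H j) => _ [_ [_ [h1 [h2 _]]]].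
  have := inv_le1 R j; move: h1 h2.
  have := enorm_ge0 (yk j - yb); have := tpos j.
  move: (j.+1%:R^-1) => z; move: (t j) => tj; move=> ? ? ? ? /andP[? ?]; nra.
have eta_cvg : etak @ \oo --> (0 : 'rV[R]_n).
  by apply: cvg_inv => j; rewrite subr0; case: (H j) => _ [_ [_ [_ [_ [_ [h _]]]]]].
have lk_cvg : lk @ \oo --> mu.
  by apply: cvg_inv => j; case: (H j) => _ [_ [_ [_ [_ [_ [_ [h _]]]]]]].
split.
  exists (fun j => (t j)^-1 *: (xk j - xb)), (fun j => (t j)^-1 *: (yk j - yb)), t,
    etak, (fun j => - lk j).
  split; first exact: wx_cvg. split; first exact: wy_cvg.
  split; first by move=> j; apply: tpos.
  split.
    apply: cvgR_inv => j; rewrite subr0 ger0_norm ?(ltW (tpos j)) //.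
    by case: (H j) => _ [_ [_ [h _]]].
  split; first exact: eta_cvg.
  split.
    apply: cvg_inv => j; rewrite opprK addrC enormB.
    by case: (H j) => _ [_ [_ [_ [_ [_ [_ [h _]]]]]]].
  move=> j; rewrite !scalerA !mulfV ?gt_eqF ?tpos // !scale1r [xb + _]addrC [yb + _]addrC !subrK.
  by case: (H j) => _ [_ [h _]].
exists xk, yk, lk, etak; split; first by move=> j; case: (H j).
split; first by move=> j; case: (H j) => _ [].
split; first exact: xk_cvg. split; first exact: yk_cvg.
split; first exact: lk_cvg. split; first exact: eta_cvg.
split; first exact: wx_cvg. split; first exact: wy_cvg.
by move=> j; case: (H j) => _ [_ [h3 [_ [_ [_ [_ [_ h9]]]]]]].
Qed.
End Main.


Lemma cluster_rV (R : realType) k (a : nat -> 'rV[R]_k) (M : R) :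
  (forall j, enorm (a j) <= M) ->
  exists mu, forall eps, 0 < eps -> forall N, exists j, (N <= j)%N /\ enorm (a j - mu) < eps.
Proof.
move=> hM.
have [mu [_ hmu]] := cluster_seq (@box_compact R k M) (fun j i => le_trans (coord_le _ i) (hM j)).
exists mu => eps eps0 N.
have e0 : 0 < eps / (k%:R + 1) by rewrite divr_gt0 // ltr_wpDl.
have [j [hj hb]] := hmu _ (nbhsx_ballx mu _ e0) N.
exists j; split => //.
rewrite -ball_normE /ball_ /= in hb.
apply: (le_lt_trans (enorm_coord_bound (M := eps / (k%:R + 1)) _ _)).
- exact: ltW.
- move=> i; apply: ltW; apply: le_lt_trans (coord_le_mx _ i) _.
  by rewrite -normrN opprB.
- rewrite mulrA ltr_pdivrMr ?ltr_wpDl //; nra.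
Qed.

Lemma enorm_unit_le1 (R : realType) k (v : 'rV[R]_k) : enorm ((enorm v)^-1 *: v) <= 1.
Proof.
rewrite enormZ ger0_norm ?invr_ge0 ?enorm_ge0 //.
have [->|h] := eqVneq (enorm v) 0; first by rewrite invr0 mul0r.
by rewrite mulVf.
Qed.

Section Main2.
Variable R : realType.
Variables n m : nat.
Variable Phi : 'rV[R]_n -> set 'rV[R]_m.
Variables (xb : 'rV[R]_n) (yb : 'rV[R]_m) (u : 'rV[R]_n) (e : 'I_m -> 'rV[R]_m).

Lemma enorm_e : orthonormal_basis e -> forall i, enorm (e i) = 1.
Proof. by move=> he i; rewrite /enorm (he i i) eqxx sqrtr1. Qed.

Lemma exists_c (mu : 'rV[R]_m) :
  exists c : R, 0 < c /\ forall i, dot mu (e i) != 0 -> c <= `|dot mu (e i)|.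
Proof.
have : ev (fun j => forall i, dot mu (e i) != 0 -> (j.+1%:R : R)^-1 <= `|dot mu (e i)|).
  apply: ev_all => i.
  have [h|h] := eqVneq (dot mu (e i)) 0.
    by exists 0%N => j _ /= /eqP; rewrite h.
  have hp : 0 < `|dot mu (e i)| by rewrite normr_gt0.
  have [N hN] := ev_inv hp.
  by exists N => j /hN /ltW.
move=> [N hN]; exists (N.+1%:R^-1); split; first by rewrite invr_gt0 ltr0Sn.
exact: hN.
Qed.

Lemma sign_close (mu v y : 'rV[R]_m) (c s : R) :
  orthonormal_basis e -> 
  (forall i, dot mu (e i) != 0 -> c <= `|dot mu (e i)|) ->
  0 < s -> y - yb = s *: v -> enorm (v - mu) < c ->
  forall i, dot mu (e i) != 0 -> 0 < dot mu (e i) * dot (y - yb) (e i).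
Proof.
move=> he hc s0 hy hv i hi.
have hr := dot_abs_le (v - mu) (e i); rewrite enorm_e // mulr1 in hr.
have hci := hc i hi.
rewrite hy dotZl.
have -> : dot v (e i) = dot mu (e i) + dot (v - mu) (e i) by rewrite dotBl addrC subrK.
move: hr hci; move: (dot mu (e i)) (dot (v - mu) (e i)) hi => a r hi hr hci.
have h2 : a * a = `|a| * `|a| by rewrite -normrM -expr2 ger0_norm ?sqr_ge0.
have h1 : r * r = `|r| * `|r| by rewrite -normrM -expr2 ger0_norm ?sqr_ge0.
have h3 : 0 <= `|r| by rewrite normr_ge0.
have h4 : r * r < a * a.
  move: h1 h2 h3 hr hci; move: `|a| `|r| => A B; nra.
rewrite mulrCA; apply: mulr_gt0 => //; rewrite mulrDr; nra.
Qed.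

Lemma SAR_holds : Phi xb yb -> orthonormal_basis e -> quasi_normal_dir Phi xb yb u e ->
  strongly_asymp_regular_dir Phi xb yb u.
Proof.
move=> hb he hQN xk yk xsk lamk xs ys hP hnP hy hreg xk_cvg yk_cvg xsk_cvg wx_cvg wy_cvg
  _ hinf hdir.
exfalso.
set lam' := fun j => (enorm (lamk j))^-1 *: lamk j.
have [mu hmu] := @cluster_rV R m lam' 1 (fun j => enorm_unit_le1 _).
have xne : forall j, xk j != xb.
  by move=> j; apply/eqP => h; apply: (hnP j); rewrite h.
have tpos : forall j, 0 < enorm (xk j - xb) by move=> j; apply: enorm_gt0; rewrite subr_eq0.
have ypos : forall j, 0 < enorm (yk j - yb) by move=> j; apply: enorm_gt0; rewrite subr_eq0.
have [N0 hN0] := hinf 0.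
have lam1 : forall j, (N0 <= j)%N -> enorm (lam' j) = 1.
  move=> j /hN0 h; rewrite /lam' enormZ ger0_norm ?invr_ge0 ?enorm_ge0 //.
  by rewrite mulVf // gt_eqF.
have mu0 : mu != 0.
  apply/eqP => mu0.
  have [j [hj hj']] := hmu (1/2) ltac:(lra) N0.
  by move: hj'; rewrite mu0 subr0 lam1 //; lra.
have [c [c0 hc]] := exists_c mu.
apply: (@notQN R n m Phi xb yb u e mu mu0 _ hQN) => eps eps0.
have c2 : 0 < c / 2 by rewrite divr_gt0.
have E1 := enorm_of_cvg xk_cvg eps0.
have E2 := enorm_of_cvg wy_cvg eps0.
have E3 := enorm_of_cvg wx_cvg eps0.
have E4 := enorm_of_cvg xsk_cvg ltr01.
have E5 := hinf ((enorm xs + 1) / eps).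
have E6 := enorm_of_cvg hdir c2.
have [N hN] := ev_and E1 (ev_and E2 (ev_and E3 (ev_and E4 (ev_and E5 (ev_and E6 (ex_intro _ N0 hN0)))))).
have d0 : 0 < Order.min eps (c / 2) by rewrite lt_min eps0 c2.
have [j [hj hj']] := hmu _ d0 N.
have [h1 [h2 [h3 [h4 [h5 [h6 h7]]]]]] := hN j hj.
move: hj'; rewrite lt_min => /andP[hl1 hl2].
exists (xk j), (yk j), (lam' j), ((enorm (lamk j))^-1 *: xsk j).
split; first exact: hP.
split; first exact: xne.
split.
  rewrite /reg_coderiv /lam' -scalerN; apply: reg_normal_scale; last exact: hreg.
  by rewrite invr_gt0.
split; first exact: h1.
split.
  move: h2; rewrite subr0 enormZ ger0_norm ?invr_ge0 ?enorm_ge0 // mulrC.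
  by rewrite ltr_pdivrMr ?tpos // => /ltW.
split; first exact: h3.
split.
  rewrite enormZ ger0_norm ?invr_ge0 ?enorm_ge0 // mulrC ltr_pdivrMr //.
  have := enorm_triangle (xsk j - xs) xs; rewrite subrK => ht.
  move: h5; rewrite ltr_pdivrMr // => h5.
  move: h4 ht h5; move: (enorm (xsk j - xs)) (enorm (xsk j)) (enorm xs) (enorm (lamk j)).
  move=> a b c' d; lra.
split; first exact: hl1.
apply: (sign_close (v := (enorm (yk j - yb))^-1 *: (yk j - yb)) he hc (ypos j)).
  by rewrite scalerA divff ?gt_eqF ?ypos // scale1r.
have -> : (enorm (yk j - yb))^-1 *: (yk j - yb) - mu =
   ((enorm (yk j - yb))^-1 *: (yk j - yb) - lam' j) + (lam' j - mu).
  by rewrite addrA subrK.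
apply: le_lt_trans (enorm_triangle _ _) _.
move: h6; rewrite subr0 => h6.
move: h6 hl2; move: (enorm _) (enorm (lam' j - mu)) => a b; lra.
Qed.
End Main2.


Section Main3.
Variable R : realType.
Variables n m : nat.
Variable Phi : 'rV[R]_n -> set 'rV[R]_m.
Variables (xb : 'rV[R]_n) (yb : 'rV[R]_m) (u : 'rV[R]_n) (e : 'I_m -> 'rV[R]_m).

Lemma bad_point (k : nat) : (2 <= k)%N -> ~ metric_subregular_dir Phi xb yb u ->
  enorm u = 1 -> Phi xb yb ->
  exists x y' r, Phi x y' /\ 0 < r /\ (forall x', Phi x' yb -> r <= enorm (x - x')) /\
    (k%:R ^+ 2) * enorm (y' - yb) < r /\ r <= enorm (x - xb) /\
    enorm (x - xb) <= k%:R^-1 /\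
    enorm (enorm (x - xb) *: u - (x - xb)) <= k%:R^-1 * enorm (x - xb).
Proof.
move=> hk hMS hu hb.
have z0 : 0 < (k%:R : R)^-1 by rewrite invr_gt0 ltr0n; case: k hk.
have K0 : 0 < (k%:R : R) ^+ 2 by rewrite exprn_gt0 // -(invr_gt0).
rewrite -/(_ ^+ 2) in K0.
have [x [hx hbad]] : exists x : 'rV[R]_n, dir_ball k%:R^-1 k%:R^-1 u (x - xb) /\
    ~ (Defs.edist x [set x' | Phi x' yb] <= (k%:R ^+ 2)%:E * Defs.edist yb (Phi x))%E.
  apply: Classical_Prop.NNPP => H; apply: hMS.
  exists k%:R^-1, k%:R^-1, (k%:R ^+ 2); split=> //; split=> //; split=> // x hx.
  by apply: Classical_Prop.NNPP => h; apply: H; exists x.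
move/negP: hbad; rewrite -ltNge => hlt.
have D1le : (Defs.edist x [set x' | Phi x' yb] <= (enorm (x - xb))%:E)%E.
  by apply: ereal_inf_lbound; exists xb.
have D1ge : (0 <= Defs.edist x [set x' | Phi x' yb])%E.
  by apply/ereal_infP => _ [a _ <-]; rewrite lee_fin enorm_ge0.
have D1lb : forall x', Phi x' yb -> (Defs.edist x [set x' | Phi x' yb] <= (enorm (x - x'))%:E)%E.
  by move=> x' hx'; apply: ereal_inf_lbound; exists x'.
move: D1le D1ge D1lb hlt; case: (Defs.edist x _) => [r| |] //= D1le D1ge D1lb hlt.
have hD2 : (Defs.edist yb (Phi x) < (r / k%:R ^+ 2)%:E)%E.
  move: hlt; case: (Defs.edist yb (Phi x)) => [d| |] //=.
  - by rewrite -EFinM !lte_fin ltr_pdivlMr // mulrC.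
  - by rewrite gt0_muley ?lte_fin.
  - by move=> _; rewrite ltNyr.
have [_ [y' hy' <-] hy'lt] := ereal_inf_lt hD2.
rewrite lte_fin ltr_pdivlMr // in hy'lt.
exists x, y', r; split => //.
have hr : (k%:R ^+ 2) * enorm (y' - yb) < r by rewrite enormB mulrC.
have hr0 : 0 < r.
  apply: le_lt_trans hr; apply: mulr_ge0; [exact: ltW | exact: enorm_ge0].
split => //; split.
  by move=> x' /D1lb; rewrite lee_fin.
split => //; split; first by rewrite -lee_fin.
move: hx; rewrite /dir_ball hu mulr1 => -[h1 h2]; split => //.
by rewrite scale1r in h1.
Qed.
End Main3.


Section Aux.
Variable R : realType.
Variable k : nat.
Implicit Types a b c w v : 'rV[R]_k.
Lemma coord_bound w c i : `|w 0 i| <= enorm c + enorm (w - c).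
Proof.
have h := coord_le c i; have h2 := coord_le (w - c) i.
rewrite !mxE in h2.
have := ler_normD (w 0 i - c 0 i) (c 0 i); rewrite subrK; lra.
Qed.
Lemma enorm_le_mx v : enorm v <= k%:R * `|v|.
Proof. by apply: enorm_coord_bound => // i; exact: coord_le_mx. Qed.
Lemma dot_expand a b : dot (a + b) (a + b) = dot a a + 2 * dot a b + dot b b.
Proof. by rewrite dotDl !dotDr (dotC b a); ring. Qed.
Lemma dot_expandB a b : dot (a - b) (a - b) = dot a a - 2 * dot a b + dot b b.
Proof. by rewrite dot_expand dotNr dotNl dotNr opprK; ring. Qed.
End Aux.
Lemma lt_sqr (R : realType) (a b : R) : 0 <= a -> 0 <= b -> a ^+ 2 < b ^+ 2 -> a < b.
Proof. move=> ha hb; rewrite !expr2 => h; nra. Qed.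

Section Main4.
Variable R : realType.
Variables n m : nat.
Variable Phi : 'rV[R]_n -> set 'rV[R]_m.
Variables (xb : 'rV[R]_n) (yb : 'rV[R]_m).

Lemma frechet_min (xh x : 'rV[R]_n) (yh : 'rV[R]_m) (r : R) : 0 < r -> yh != yb ->
  Phi xh yh ->
  (forall x' y', Phi x' y' ->
     enorm (yh - yb) + r^-1 * dot (xh - x) (xh - x) <=
     enorm (y' - yb) + r^-1 * dot (x' - x) (x' - x)) ->
  reg_normal Phi xh yh (- (2 / r) *: (xh - x))
    (- ((enorm (yh - yb))^-1 *: (yh - yb))).
Proof.
move=> r0 hy hP hmin; split => // eps eps0.
set rho := enorm (yh - yb).
have rho0 : 0 < rho by apply: enorm_gt0; rewrite subr_eq0.
set C := rho^-1 / 2 + r^-1.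
have C0 : 0 < C by rewrite /C addr_gt0 ?divr_gt0 ?invr_gt0.
exists (eps / C); split; first by rewrite divr_gt0.
move=> x' y' hP' hD.
have hm := hmin _ _ hP'.
have ex : x' - x = (xh - x) + (x' - xh) by rewrite [RHS]addrC addrA subrK.
have ey : y' - yb = (yh - yb) + (y' - yh) by rewrite [RHS]addrC addrA subrK.
have hPx : dot (x' - x) (x' - x) = dot (xh - x) (xh - x) + 2 * dot (xh - x) (x' - xh)
   + dot (x' - xh) (x' - xh) by rewrite ex dot_expand.
have hS2 : enorm (y' - yb) ^+ 2 = rho ^+ 2 + 2 * dot (yh - yb) (y' - yh)
   + dot (y' - yh) (y' - yh) by rewrite /rho !enorm_sq ey dot_expand.
have hD2 : Num.sqrt (dot (x' - xh) (x' - xh) + dot (y' - yh) (y' - yh)) ^+ 2 =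
   dot (x' - xh) (x' - xh) + dot (y' - yh) (y' - yh).
  by rewrite sqr_sqrtr // addr_ge0 // dot_ge0.
have hD0 : 0 <= Num.sqrt (dot (x' - xh) (x' - xh) + dot (y' - yh) (y' - yh)).
  exact: sqrtr_ge0.
have hQ1 := dot_ge0 (x' - xh); have hQ2 := dot_ge0 (y' - yh).
have hS0 := enorm_ge0 (y' - yb).
move: hm hPx hS2 hD hD2 hD0 hQ1 hQ2 hS0.
rewrite !(dotNl, dotZl) -/rho.
set D := Num.sqrt _. set S := enorm (y' - yb). set Px' := dot (x' - x) (x' - x).
set Px := dot (xh - x) (xh - x). set A2 := dot (xh - x) (x' - xh).
set Q1 := dot (x' - xh) (x' - xh). set A1 := dot (yh - yb) (y' - yh).
set Q2 := dot (y' - yh) (y' - yh).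
move=> hm hPx hS2 hD hD2 hD0 hQ1 hQ2 hS0.
have hSb : S - rho <= rho^-1 * A1 + rho^-1 * Q2 / 2.
  have h2 : 2 * rho * (S - rho) <= 2 * A1 + Q2.
    have := sqr_ge0 (S - rho); rewrite !expr2 in hS2 *; nra.
  rewrite -(ler_pM2l (_ : 0 < 2 * rho)); last by rewrite mulr_gt0.
  apply: (le_trans h2); rewrite le_eqVlt; apply/orP; left; apply/eqP.
  field; by rewrite gt_eqF.
rewrite hPx mulrDr mulrDr in hm.
have hir : 0 < r^-1 by rewrite invr_gt0.
have hirho : 0 < rho^-1 by rewrite invr_gt0.
have key : - (2 / r) * A2 + - (rho^-1 * A1) <= C * (Q1 + Q2).
  rewrite /C; move: hm hSb; rewrite !mulrA; nra.
apply: (le_trans key).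
rewrite -hD2.
have hCD : C * D < eps by rewrite mulrC -ltr_pdivlMr.
rewrite expr2; nra.
Qed.
End Main4.


Section Main5.
Variable R : realType.
Variables n m : nat.
Variable Phi : 'rV[R]_n -> set 'rV[R]_m.
Variables (xb : 'rV[R]_n) (yb : 'rV[R]_m).

Lemma min_point (x : 'rV[R]_n) (y' : 'rV[R]_m) (r : R) : closed (gph Phi) ->
  Phi x y' -> 0 < r -> (forall x', Phi x' yb -> r <= enorm (x - x')) ->
  enorm (y' - yb) < r ->
  exists xh yh, Phi xh yh /\ yh != yb /\ ~ Phi xh yb /\
    enorm (yh - yb) + r^-1 * dot (xh - x) (xh - x) <= enorm (y' - yb) /\
    reg_normal Phi xh yh (- (2 / r) *: (xh - x))
      (- ((enorm (yh - yb))^-1 *: (yh - yb))).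
Proof.
move=> hcl hP r0 hS hd.
set d := enorm (y' - yb) in hd *.
pose psi := fun p : 'rV[R]_n * 'rV[R]_m => enorm (p.2 - yb) + r^-1 * dot (p.1 - x) (p.1 - x).
set B1 := [set v : 'rV[R]_n | forall i, `|v 0 i| <= enorm x + r].
set B2 := [set v : 'rV[R]_m | forall i, `|v 0 i| <= enorm yb + r].
set A := (B1 `*` B2) `&` gph Phi.
have hir : 0 < r^-1 by rewrite invr_gt0.
have psi0 : forall p, 0 <= psi p.
  move=> p; rewrite /psi addr_ge0 ?enorm_ge0 // mulr_ge0 ?dot_ge0 //; exact: ltW.
have inbox : forall p, psi p <= d -> B1 p.1 /\ B2 p.2.
  move=> [p1 p2]; rewrite /psi /= => h.
  have hq := dot_ge0 (p1 - x); have he := enorm_ge0 (p2 - yb).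
  have hq' : 0 <= r^-1 * dot (p1 - x) (p1 - x) by rewrite mulr_ge0 // ltW.
  have h1 : enorm (p2 - yb) <= d by lra.
  have h2 : dot (p1 - x) (p1 - x) <= r * d.
    rewrite -(ler_pM2l hir) mulrA mulVf ?gt_eqF // mul1r; lra.
  have h3 : enorm (p1 - x) <= r.
    apply: le_sqr_nonneg; first exact: ltW.
    rewrite enorm_sq; apply: (le_trans h2); rewrite expr2 ler_wpM2l //; [exact: ltW|lra].
  split => i /=.
  - apply: le_trans (coord_bound _ x i) _; lra.
  - apply: le_trans (coord_bound _ yb i) _; lra.
have cA : compact A.
  apply: compact_closedI => //; apply: compact_setX; exact: box_compact.
have pxy : psi (x, y') = d by rewrite /psi /= subrr dot0l mulr0 addr0.
have Ane : A (x, y').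
  split => //; have [] := inbox (x, y'); first by rewrite pxy.
  by move=> ? ?; split.
have lsc : forall p, A p -> forall eps, 0 < eps ->
     exists W, nbhs p W /\ forall q, W q -> A q -> psi p <= psi q + eps.
  move=> [p1 p2] _ eps eps0.
  set P := enorm (p1 - x).
  have P0 : 0 <= P by exact: enorm_ge0.
  set Cst := m%:R + 2 * r^-1 * P * n%:R.
  have Cst0 : 0 <= Cst.
    rewrite /Cst addr_ge0 // mulr_ge0 // mulr_ge0 // mulr_ge0 //; exact: ltW.
  set del := eps / (Cst + 1).
  have del0 : 0 < del by rewrite divr_gt0 // ltr_wpDl.
  exists (ball p1 del `*` ball p2 del); split; first exact: nbhs_pair.
  move=> [q1 q2] [/= hb1 hb2] _.
  rewrite -ball_normE /ball_ /= in hb1 hb2.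
  have e1 : enorm (p1 - q1) <= n%:R * del.
    apply: le_trans (enorm_le_mx _) _; apply: ler_wpM2l => //; exact: (ltW hb1).
  have e2 : enorm (p2 - q2) <= m%:R * del.
    rewrite -ball_normE /ball_ /= in hb2.
    apply: le_trans (enorm_le_mx _) _; apply: ler_wpM2l => //; exact: (ltW hb2).
  have t2 : enorm (p2 - yb) <= enorm (p2 - q2) + enorm (q2 - yb).
    by have := enorm_triangle (p2 - q2) (q2 - yb); rewrite addrA subrK.
  have t1 : dot (p1 - x) (p1 - x) - dot (q1 - x) (q1 - x) <= 2 * P * enorm (p1 - q1).
    have -> : q1 - x = (p1 - x) - (p1 - q1) by rewrite opprB [RHS]addrC addrA subrK.
    rewrite (dot_expandB (p1 - x) (p1 - q1)).
    have := dot_le (p1 - x) (p1 - q1); have := dot_ge0 (p1 - q1); rewrite -/P; lra.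
  have h3 : r^-1 * dot (p1 - x) (p1 - x) - r^-1 * dot (q1 - x) (q1 - x) <=
      r^-1 * (2 * P * (n%:R * del)).
    rewrite -mulrBr; apply: ler_wpM2l; first exact: ltW.
    apply: (le_trans t1); apply: ler_wpM2l => //; lra.
  have h4 : Cst * del <= eps.
    rewrite /del mulrA ler_pdivrMr ?ltr_wpDl //; nra.
  have h5 : Cst * del = m%:R * del + r^-1 * (2 * P * (n%:R * del)) by rewrite /Cst; ring.
  rewrite /psi /=; lra.
have [[xh yh] [Ap hmin]] := exists_min cA (ex_intro _ (x, y') Ane) psi0 lsc.
have hglob : forall x2 y2, Phi x2 y2 -> psi (xh, yh) <= psi (x2, y2).
  move=> x2 y2 h; case: (lerP (psi (x2, y2)) d) => hq.
  - apply: hmin; split => //; have [? ?] := inbox _ hq; by split.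
  - by apply: ltW; apply: le_lt_trans hq; rewrite -pxy; apply: hmin.
have hpd : psi (xh, yh) <= d by rewrite -pxy; apply: hglob.
have hxh : Phi xh yh by case: Ap.
have hs : enorm (xh - x) < r.
  apply: lt_sqr; [exact: enorm_ge0 | exact: ltW |].
  rewrite enorm_sq.
  have : r^-1 * dot (xh - x) (xh - x) < r.
    move: hpd; rewrite /psi /=; have := enorm_ge0 (yh - yb); lra.
  by rewrite expr2 mulrC ltr_pdivrMr.
have hnS : ~ Phi xh yb.
  by move=> /hS; rewrite enormB; lra.
have hy : yh != yb by apply/eqP => h; apply: hnS; rewrite -h.
exists xh, yh; split => //; split => //; split => //; split => //.
apply: frechet_min => //.
Qed.
End Main5.


Lemma unit_diff (R : realType) k (a b : 'rV[R]_k) : 0 < enorm a -> 0 < enorm b ->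
  enorm b * enorm ((enorm a)^-1 *: a - (enorm b)^-1 *: b) <= 2 * enorm (a - b).
Proof.
move=> ha hb.
have -> : enorm b * enorm ((enorm a)^-1 *: a - (enorm b)^-1 *: b) =
    enorm (enorm b *: ((enorm a)^-1 *: a - (enorm b)^-1 *: b)).
  by rewrite enormZ ger0_norm // ltW.
rewrite scalerBr !scalerA mulfV ?gt_eqF // scale1r.
have -> : (enorm b * (enorm a)^-1) *: a - b =
    (enorm b * (enorm a)^-1 - 1) *: a + (a - b).
  by rewrite scalerBl scale1r addrA subrK.
apply: le_trans (enorm_triangle _ _) _.
rewrite enormZ.
have -> : `|enorm b * (enorm a)^-1 - 1| * enorm a = `|enorm b - enorm a|.
  rewrite -[X in _ * X](@ger0_norm _ (enorm a)) ?ltW // -normrM mulrBl -mulrA mulVf ?gt_eqF //.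
  by rewrite mulr1 mul1r.
have t1 := enorm_triangle (a - b) b; rewrite subrK in t1.
have t2 := enorm_triangle (b - a) a; rewrite subrK enormB in t2.
have : `|enorm b - enorm a| <= enorm (a - b).
  by rewrite ler_norml; apply/andP; split; lra.
lra.
Qed.

Lemma aux1 (R : realType) (k z : R) : k * z = 1 -> 2 <= k -> 0 < z -> z <= 1 / 2.
Proof. move=> *; nra. Qed.
Lemma aux2 (R : realType) (k : R) : 2 <= k -> 1 <= k * k.
Proof. move=> *; nra. Qed.

Lemma aux3 (R : realType) (T z : R) : 0 < T -> 0 < z -> z <= 1 / 2 ->
  2 * T * (z * z) <= 3 * z * T.
Proof. move=> h1 h2 h3; have p0 : 0 < T * z by apply: mulr_gt0. nra. Qed.

Section Main6.
Variable R : realType.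
Variables n m : nat.
Variable Phi : 'rV[R]_n -> set 'rV[R]_m.
Variables (xb : 'rV[R]_n) (yb : 'rV[R]_m) (u : 'rV[R]_n) (e : 'I_m -> 'rV[R]_m).

Lemma step (k : nat) : (2 <= k)%N -> closed (gph Phi) ->
  ~ metric_subregular_dir Phi xb yb u -> enorm u = 1 -> Phi xb yb ->
  exists xh yh eta, Phi xh yh /\ xh != xb /\ yh != yb /\
   reg_coderiv Phi xh yh ((enorm (yh - yb))^-1 *: (yh - yb)) eta /\
   enorm (xh - xb) <= 3 / k%:R /\ enorm (yh - yb) <= 3 / k%:R * enorm (xh - xb) /\
   enorm ((enorm (xh - xb))^-1 *: (xh - xb) - u) <= 3 / k%:R /\ enorm eta <= 3 / k%:R.
Proof.
move=> hk hcl hMS hu hb.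
have [x [y' [r [hP [r0 [hS [hK [hrt [htz hdir]]]]]]]]] := bad_point hk hMS hu hb.
have k0 : (0 : R) < k%:R by rewrite ltr0n; apply: leq_trans hk.
have k2 : (2 : R) <= k%:R by rewrite (ler_nat R 2 k).
set z := (k%:R : R)^-1.
have z0 : 0 < z by rewrite invr_gt0.
have hkz : k%:R * z = 1 by rewrite mulfV ?gt_eqF.
have zh : z <= 1 / 2 by apply: aux1 hkz k2 z0.
have hd0 := enorm_ge0 (y' - yb).
have hd : enorm (y' - yb) < r.
  apply: le_lt_trans hK; rewrite ler_peMl // expr2; exact: aux2.
have [xh [yh [hP' [hy [hnS [hpsi hN]]]]]] := min_point hcl hP r0 hS hd.
exists xh, yh, (- (2 / r) *: (xh - x)).
have hxb : xh != xb by apply/eqP => h; apply: hnS; rewrite h.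
split => //; split => //; split => //; split => //.
set t := enorm (x - xb) in hrt htz hdir *.
set s := enorm (xh - x).
set T := enorm (xh - xb).
set rho := enorm (yh - yb) in hpsi *.
have s0 : 0 <= s by exact: enorm_ge0.
have rho0 : 0 <= rho by exact: enorm_ge0.
have hs2 : dot (xh - x) (xh - x) <= r * enorm (y' - yb).
  have := dot_ge0 (xh - x) => hq.
  have : r^-1 * dot (xh - x) (xh - x) <= enorm (y' - yb) by lra.
  by rewrite mulrC ler_pdivrMr // mulrC.
have hrd : r * enorm (y' - yb) * (k%:R ^+ 2) < r * r.
  by rewrite -mulrA ltr_pM2l // mulrC.
have hsz : s < r * z.
  apply: lt_sqr => //; first by rewrite mulr_ge0 // ltW.
  rewrite /s enorm_sq.
  apply: (le_lt_trans hs2).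
  have zz : 0 < z * z by rewrite mulr_gt0.
  have := hrd; rewrite -(ltr_pM2r zz) => h.
  have e1 : r * enorm (y' - yb) * k%:R ^+ 2 * (z * z) = r * enorm (y' - yb).
    by rewrite /z; field; rewrite gt_eqF.
  rewrite e1 in h; apply: (lt_le_trans h); rewrite expr2 le_eqVlt; apply/orP; left; apply/eqP; ring.
have hrho : rho < r * (z * z).
  have : rho <= enorm (y' - yb).
    have : 0 <= r^-1 * dot (xh - x) (xh - x) by rewrite mulr_ge0 ?dot_ge0 // invr_ge0 ltW.
    lra.
  move=> h1; apply: le_lt_trans h1 _.
  have zz : 0 < z * z by rewrite mulr_gt0.
  have := hK; rewrite -(ltr_pM2r zz) => h.
  have e1 : k%:R ^+ 2 * enorm (y' - yb) * (z * z) = enorm (y' - yb).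
    by rewrite /z; field; rewrite gt_eqF.
  by rewrite e1 in h.
have hT1 : T <= s + t.
  have := enorm_triangle (xh - x) (x - xb); rewrite addrA subrK //.
have hT2 : t <= s + T.
  have := enorm_triangle (x - xh) (xh - xb); rewrite addrA subrK enormB //.
have t0 : 0 < t by lra.
have rzt : r * z <= t * z by rewrite ler_pM2r.
have tz : t * z <= t * (1 / 2) by rewrite ler_pM2l.
have hst : s < t / 2 by lra.
have T0 : 0 < T by lra.
have h3z : 3 / k%:R = 3 * z by [].
rewrite h3z.
split; first lra.
split.
  have zz : 0 < z * z by rewrite mulr_gt0.
  have h1 : r * (z * z) <= t * (z * z) by rewrite ler_pM2r.
  have h2 : t * (z * z) <= 2 * T * (z * z) by rewrite ler_pM2r //; lra.
  have h3 : 2 * T * (z * z) <= 3 * z * T by apply: aux3.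
  lra.
split.
  have hw : enorm ((t)^-1 *: (x - xb) - u) <= z.
    have -> : t^-1 *: (x - xb) - u = t^-1 *: ((x - xb) - t *: u).
      by rewrite [RHS]scalerBr scalerA mulVf ?gt_eqF // scale1r.
    have it0 : 0 <= t^-1 by rewrite invr_ge0; exact: ltW t0.
    rewrite enormZ (ger0_norm it0) enormB.
    rewrite -(ler_pM2l t0) mulrA mulfV ?gt_eqF // mul1r mulrC; exact: hdir.
  have hu2 := unit_diff T0 t0.
  rewrite -/T -/t (_ : xh - xb - (x - xb) = xh - x) in hu2; last first.
    by rewrite opprB addrA subrK.
  have hu3 : enorm (T^-1 *: (xh - xb) - t^-1 *: (x - xb)) <= 2 * z.
    rewrite -(ler_pM2l t0); apply: (le_trans hu2); rewrite -/s; lra.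
  have := enorm_triangle (T^-1 *: (xh - xb) - t^-1 *: (x - xb)) (t^-1 *: (x - xb) - u).
  rewrite addrA subrK; lra.
have h2r : 0 <= 2 / r by rewrite divr_ge0 //; exact: ltW r0.
rewrite enormZ normrN (ger0_norm h2r) -/s.
have : s * r^-1 < z by rewrite ltr_pdivrMr // mulrC.
have -> : 2 / r * s = 2 * (s * r^-1) by rewrite mulrAC mulrA.
lra.
Qed.
End Main6.


Section Main7.
Variable R : realType.
Variables n m : nat.
Variable Phi : 'rV[R]_n -> set 'rV[R]_m.
Variables (xb : 'rV[R]_n) (yb : 'rV[R]_m) (u : 'rV[R]_n) (e : 'I_m -> 'rV[R]_m).

Lemma MS_holds : closed (gph Phi) -> Phi xb yb -> enorm u = 1 -> orthonormal_basis e ->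
  quasi_normal_dir Phi xb yb u e -> metric_subregular_dir Phi xb yb u.
Proof.
move=> hcl hb hu he hQN; apply: Classical_Prop.NNPP => hMS.
have hjj : forall j : nat, exists d : 'rV[R]_n * 'rV[R]_m * 'rV[R]_n,
   Phi d.1.1 d.1.2 /\ d.1.1 != xb /\ d.1.2 != yb /\
   reg_coderiv Phi d.1.1 d.1.2 ((enorm (d.1.2 - yb))^-1 *: (d.1.2 - yb)) d.2 /\
   enorm (d.1.1 - xb) <= j.+1%:R^-1 /\
   enorm (d.1.2 - yb) <= j.+1%:R^-1 * enorm (d.1.1 - xb) /\
   enorm ((enorm (d.1.1 - xb))^-1 *: (d.1.1 - xb) - u) <= j.+1%:R^-1 /\
   enorm d.2 <= j.+1%:R^-1.
  move=> j.
  have hk : (2 <= 3 * j.+1)%N.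
    apply: (@leq_trans 3) => //; exact: leq_pmulr.
  have e3 : 3 / (3 * j.+1)%:R = (j.+1%:R : R)^-1.
    rewrite natrM; field; by rewrite addrC natr1 pnatr_eq0.
  have [xh [yh [eta H]]] := step hk hcl hMS hu hb.
  rewrite e3 in H; by exists (xh, yh, eta).
have [f hf] := choice hjj.
set lam := fun j => (enorm ((f j).1.2 - yb))^-1 *: ((f j).1.2 - yb).
have lam1 : forall j, enorm (lam j) = 1.
  move=> j; rewrite /lam enormZ ger0_norm ?invr_ge0 ?enorm_ge0 // mulVf //.
  rewrite gt_eqF // enorm_gt0 // subr_eq0; by case: (hf j) => _ [_ []].
have [mu hmu] := @cluster_rV R m lam 1 (fun j => (ltac:(by rewrite lam1))).

have mu0 : mu != 0.
  apply/eqP => mu0.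
  have [j [hj hj']] := hmu (1/2) ltac:(lra) 0%N.
  by move: hj'; rewrite mu0 subr0 lam1; lra.
have [c [c0 hc]] := exists_c e mu.
apply: (@notQN R n m Phi xb yb u e mu mu0 _ hQN) => eps eps0.
have [N hN] := ev_inv eps0.
have d0 : 0 < Order.min eps c by rewrite lt_min eps0 c0.
have [j [hj hj']] := hmu _ d0 N.
move: hj'; rewrite lt_min => /andP[hl1 hl2].
have hz := hN j hj.
have [h1 [h2 [h3 [h4 [h5 [h6 [h7 h8]]]]]]] := hf j.
move: hz h5 h6 h7 h8; move: (j.+1%:R^-1) => z hz h5 h6 h7 h8.
exists (f j).1.1, (f j).1.2, (lam j), (f j).2.
split => //; split => //; split => //.
split; first lra.
split.
  apply: (le_trans h6); apply: ler_wpM2r; [exact: enorm_ge0 | exact: ltW].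
split; first lra.
split; first lra.
split => //.
apply: (sign_close (v := lam j) he hc (_ : 0 < enorm ((f j).1.2 - yb))).
- by rewrite enorm_gt0 // subr_eq0.
- by rewrite /lam scalerA divff ?scale1r // gt_eqF // enorm_gt0 // subr_eq0.
- exact: hl2.
Qed.
End Main7.

Unset Implicit Arguments. Set Strict Implicit. Set Printing Implicit Defensive.

Theorem theorem5p12 (R : realType) (n m : nat) (Phi : 'rV[R]_n -> set 'rV[R]_m)
    (xb : 'rV[R]_n) (yb : 'rV[R]_m) (u : 'rV[R]_n) (e : 'I_m -> 'rV[R]_m) :
  closed (gph Phi) ->
  Phi xb yb ->
  enorm u = 1 ->
  orthonormal_basis e ->
  quasi_normal_dir Phi xb yb u e ->
  strongly_asymp_regular_dir Phi xb yb u /\ metric_subregular_dir Phi xb yb u.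
Proof.
move=> hcl hb hu he hQN; split.
- exact: SAR_holds.
- exact: MS_holds.
Qed.
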